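(* The algebra $A_k$ is neither left nor right noetherian.
   Context: Let $k$ be a field. $A_k=k\langle x_1,\dots,x_7\rangle/(r_1,\dots,r_7)$, graded by $\deg x_i=1$, with $r_1=[x_2,x_3]+[x_4,x_5]+[x_6,x_7]$, $r_2=[x_3,x_1]+[x_4,x_6]+[x_7,x_5]$, $r_3=[x_1,x_2]+[x_6,x_5]+[x_7,x_4]$, $r_4=[x_5,x_1]+[x_3,x_7]+[x_6,x_2]$, $r_5=[x_1,x_4]+[x_2,x_7]+[x_3,x_6]$, $r_6=[x_7,x_1]+[x_5,x_3]+[x_2,x_4]$, $r_7=[x_1,x_6]+[x_4,x_3]+[x_5,x_2]$. *)

(* Defs.v *)
From HB Require Import structures.
From Stdlib Require Import List.
From mathcomp Require Import all_boot all_order all_algebra.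
Set Implicit Arguments. Unset Strict Implicit. Unset Printing Implicit Defensive.
Import GRing.Theory.
Local Open Scope ring_scope.

(* Words in the 7 letters x_1..x_7 (letter x_j is the ordinal j-1 : 'I_7). *)
Definition word := seq 'I_7.

Section FreeAlg.
Variable k : fieldType.

(* Elements of k<x_1,...,x_7> are the finitely supported coefficient
   functions on words; we work inside all functions word -> k. *)
Definition series := word -> k.

Definition fin_supp (f : series) : Prop :=
  exists s : seq word, forall w, f w != 0 -> w \in s.

Definition s0 : series := fun _ => 0.
Definition sadd (f g : series) : series := fun w => f w + g w.
Definition ssub (f g : series) : series := fun w => f w - g w.
Definition smul (f g : series) : series :=
  fun w => \sum_(i < (size w).+1) f (take i w) * g (drop i w).

Definition X (j : nat) : series := fun w => (w == [:: (inord j.-1 : 'I_7)])%:R.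

Definition comm (a b : series) : series := ssub (smul a b) (smul b a).
Definition C (i j : nat) : series := comm (X i) (X j).

(* the relations r_1, ..., r_7 (r (i-1) = r_i) *)
Definition r (i : 'I_7) : series :=
  match val i with
  | 0 => sadd (sadd (C 2 3) (C 4 5)) (C 6 7)
  | 1 => sadd (sadd (C 3 1) (C 4 6)) (C 7 5)
  | 2 => sadd (sadd (C 1 2) (C 6 5)) (C 7 4)
  | 3 => sadd (sadd (C 5 1) (C 3 7)) (C 6 2)
  | 4 => sadd (sadd (C 1 4) (C 2 7)) (C 3 6)
  | 5 => sadd (sadd (C 7 1) (C 5 3)) (C 2 4)
  | _ => sadd (sadd (C 1 6) (C 4 3)) (C 5 2)
  end.

Definition in_rel_ideal (f : series) : Prop :=
  exists l : seq (series * 'I_7 * series),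
    (forall t, In t l -> fin_supp t.1.1 /\ fin_supp t.2) /\
    (forall w, f w = \sum_(t <- l) smul (smul t.1.1 (r t.1.2)) t.2 w).

(* A (left / right) ideal of A_k = F/(r) is identified, as usual, with its
   preimage in F = k<x_1..x_7>, i.e. a left (right) ideal of F containing (r). *)
Definition ideal_base (L : series -> Prop) : Prop :=
  [/\ (forall f, L f -> fin_supp f),
      (forall f g, (forall w, f w = g w) -> L f -> L g),
      L s0,
      (forall f g, L f -> L g -> L (sadd f g)) &
      (forall f, fin_supp f -> in_rel_ideal f -> L f)].

Definition left_ideal_A (L : series -> Prop) : Prop :=
  ideal_base L /\ (forall a f, fin_supp a -> L f -> L (smul a f)).

Definition right_ideal_A (L : series -> Prop) : Prop :=
  ideal_base L /\ (forall a f, fin_supp a -> L f -> L (smul f a)).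

Definition acc_on (P : (series -> Prop) -> Prop) : Prop :=
  forall Ch : nat -> series -> Prop,
    (forall n, P (Ch n)) ->
    (forall n f, Ch n f -> Ch n.+1 f) ->
    exists N, forall n, (N <= n)%N -> forall f, Ch n f -> Ch N f.

Definition A_left_noetherian : Prop := acc_on left_ideal_A.
Definition A_right_noetherian : Prop := acc_on right_ideal_A.

End FreeAlg.

(* Main.v *)
Require Import Defs.
From mathcomp Require Import all_boot all_algebra.
Set Implicit Arguments. Unset Strict Implicit. Unset Printing Implicit Defensive.
Import GRing.Theory.
Local Open Scope ring_scope.

Fixpoint all_words (n : nat) : seq word :=
  if n is n'.+1 then [seq x :: w | x <- enum 'I_7, w <- all_words n'] else [:: [::]].

Lemma mem_all_words n w : (w \in all_words n) = (size w == n).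
Proof.
elim: n w => [|n IH] [|x w] //=.
- by apply/allpairsP => -[[y v] [_ _]].
- apply/allpairsP/eqP => [[[y v] [_ Hv [_ ->]]]|[Hw]].
    by move: Hv; rewrite IH => /eqP ->.
  by exists (x, w); rewrite mem_enum IH Hw.
Qed.

Lemma uniq_all_words n : uniq (all_words n).
Proof.
elim: n => [|n IH] //=.
apply: allpairs_uniq => //; first exact: enum_uniq.
by move=> [x w] [y v] _ _ /= [-> ->].
Qed.

Lemma split_sum (R : nmodType) n i (F : word -> word -> R) : (i <= n)%N ->
  \sum_(w <- all_words n) F (take i w) (drop i w) =
  \sum_(u <- all_words i) \sum_(v <- all_words (n - i)) F u v.
Proof.
elim: i n F => [|i IH] n F Hi.
  rewrite big_seq1 subn0; apply: eq_bigr => w _; by rewrite take0 drop0.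
case: n Hi => [|n] // Hi.
rewrite /= !big_allpairs_dep /=; apply: eq_bigr => x _.
by rewrite (IH n (fun u v => F (x :: u) v)).
Qed.


Section S.
Variable k : fieldType.
Notation M := 'M[k]_2.

Definition J : M := \matrix_(i, j) (if (val i == 0%N) && (val j == 1%N) then -1
   else if (val i == 1%N) && (val j == 0%N) then 1 else 0).

Lemma JJ : J * J = -1.
Proof.
apply/matrixP => i j; rewrite !mxE !big_ord_recl big_ord0 !mxE.
case: i j => [[|[|i]] Hi] [[|[|j]] Hj] //=; rewrite ?mulr0 ?mul0r ?add0r ?addr0 ?mulrN1 ?mulN1r ?opprK ?oppr0 //=.
Qed.

Definition cn (j : nat) (t : bool) : M :=
  if t then (if j == 0%N then 1 else if j == 5%N then J else 0)
  else (if j == 1%N then 1 else if j == 4%N then J else 0).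

Fixpoint wt (w : word) (T : seq bool) : M :=
  match w, T with
  | x :: w', t :: T' => cn x t * wt w' T'
  | [::], [::] => 1
  | _, _ => 0
  end.

Lemma wt_cat u v T1 T2 : size u = size T1 -> wt (u ++ v) (T1 ++ T2) = wt u T1 * wt v T2.
Proof.
elim: u T1 => [|x u IH] [|t T1] //=; first by rewrite mul1r.
by case=> H; rewrite IH // mulrA.
Qed.

Lemma wt_split w T i : size w = size T -> wt w T = wt (take i w) (take i T) * wt (drop i w) (drop i T).
Proof.
move=> H; rewrite -wt_cat ?cat_take_drop //.
by rewrite !size_take H.
Qed.

Definition S (f : series k) (T : seq bool) : M :=
  \sum_(w <- all_words (size T)) (f w)%:M * wt w T.

Lemma S_ext f g T : (forall w, f w = g w) -> S f T = S g T.
Proof. by move=> H; apply: eq_bigr => w _; rewrite H. Qed.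

Lemma S_add f g T : S (sadd f g) T = S f T + S g T.
Proof. by rewrite /S -big_split; apply: eq_bigr => w _; rewrite /sadd raddfD mulrDl. Qed.

Lemma S_sub f g T : S (ssub f g) T = S f T - S g T.
Proof. by rewrite /S -sumrB; apply: eq_bigr => w _; rewrite /ssub raddfB mulrBl. Qed.

Lemma S_smul f g T : S (smul f g) T =
  \sum_(i < (size T).+1) S f (take i T) * S g (drop i T).
Proof.
rewrite /S.
transitivity (\sum_(w <- all_words (size T)) \sum_(i < (size T).+1)
   ((f (take i w) * g (drop i w))%:M * (wt (take i w) (take i T) * wt (drop i w) (drop i T)))).
  rewrite big_seq [RHS]big_seq; apply: eq_bigr => w; rewrite mem_all_words => /eqP Hw.
  rewrite /smul Hw raddf_sum mulr_suml; apply: eq_bigr => i _.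
  by rewrite -wt_split.
rewrite exchange_big /=; apply: eq_bigr => i _.
have Hi : (i <= size T)%N by rewrite -ltnS.
rewrite (split_sum (fun u v => (f u * g v)%:M * (wt u (take i T) * wt v (drop i T))) Hi).
rewrite size_takel // size_drop mulr_suml; apply: eq_bigr => u _.
rewrite mulr_sumr; apply: eq_bigr => v _.
rewrite scalar_mxM -!mulrA; congr (_ * _).
rewrite !mulrA; congr (_ * _).
exact: (esym (scalar_mxC _ _)).
Qed.

Definition ind (w0 : word) : series k := fun w => (w == w0)%:R.

Lemma S_ind w0 T : S (ind w0) T = if size w0 == size T then wt w0 T else 0.
Proof.
rewrite /S /ind; case: ifP => Hs.
  rewrite (bigD1_seq w0) ?uniq_all_words ?mem_all_words //=.
  rewrite eqxx mul1r big1 ?addr0 //.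
  by move=> w /negbTE ->; rewrite (_ : (false%:R : k) = 0) // raddf0 mul0r.
rewrite big_seq big1 // => w; rewrite mem_all_words => /eqP Hw.
case: eqP => [E|_]; last by rewrite (_ : (false%:R : k) = 0) // raddf0 mul0r.
by move: Hs; rewrite -E Hw eqxx.
Qed.
End S.


Section S3.
Variable k : fieldType.
Notation M := 'M[k]_2.

Lemma S_pair (x y : 'I_7) T :
  \sum_(i < (size T).+1) S (ind k [:: x]) (take i T) * S (ind k [:: y]) (drop i T) =
  if T is [:: t1; t2] then cn k x t1 * cn k y t2 else 0.
Proof.
case: T => [|t1 [|t2 [|t3 T]]]; last first.
  rewrite big1 // => i _; rewrite !S_ind size_takel ?size_drop; last by rewrite -ltnS.
  case: i => [[|[|i]] Hi] //=; rewrite ?mul0r ?mulr0 //.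
all: by rewrite /= !big_ord_recl big_ord0 !S_ind /= ?(mul0r,mulr0,mul1r,mulr1,addr0,add0r).
Qed.
Lemma S_C i j T : (0 < i <= 7)%N -> (0 < j <= 7)%N ->
  S (C k i j) T = if T is [:: t1; t2]
     then cn k i.-1 t1 * cn k j.-1 t2 - cn k j.-1 t1 * cn k i.-1 t2 else 0.
Proof.
move=> /andP [Hi0 Hi] /andP [Hj0 Hj].
rewrite /C /comm S_sub !S_smul.
rewrite (_ : X k i = ind k [:: inord i.-1]) // (_ : X k j = ind k [:: inord j.-1]) //.
rewrite !S_pair; case: T => [|t1 [|t2 [|t3 T]]]; rewrite ?subrr //.
by rewrite !inordK // prednK.
Qed.

Lemma S_r l T : S (r k l) T = 0.
Proof.
case: l => [[|[|[|[|[|[|[|l]]]]]]] Hl] //; rewrite /r [val _]/=; cbv iota;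
rewrite S_add (S_add (C k _ _)) !S_C //;
case: T => [|t1 [|t2 [|t3 T]]]; rewrite ?addr0 //;
case: t1; case: t2; rewrite /cn /= ?(mul0r, mulr0, mul1r, mulr1, subr0, sub0r, addr0, add0r, JJ, subrr, opprK, addrN, addNr, oppr0) //.
Qed.
End S3.


Section S4.
Variable k : fieldType.
Notation M := 'M[k]_2.

Lemma S_sum (I : Type) (l : seq I) (F : I -> series k) T :
  S (fun w => \sum_(t <- l) F t w) T = \sum_(t <- l) S (F t) T.
Proof.
rewrite /S; under eq_bigr do rewrite raddf_sum mulr_suml.
by rewrite exchange_big.
Qed.

Lemma S_relideal (f : series k) : in_rel_ideal f -> forall T, S f T = 0.
Proof.
move=> [l [_ Hf]] T; rewrite (S_ext T Hf) S_sum big1 // => t _.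
rewrite S_smul big1 // => i _; rewrite S_smul big1 ?mul0r // => j _.
by rewrite S_r mulr0.
Qed.

Lemma fs_add (f g : series k) : fin_supp f -> fin_supp g -> fin_supp (sadd f g).
Proof.
move=> [s1 Hf] [s2 Hg]; exists (s1 ++ s2) => w.
rewrite /sadd mem_cat; case: (f w =P 0) => [->|/eqP/Hf -> //].
by rewrite add0r => /Hg ->; rewrite orbT.
Qed.

Lemma fs_smul (a f : series k) : fin_supp a -> fin_supp f -> fin_supp (smul a f).
Proof.
move=> [s1 Ha] [s2 Hf]; exists [seq u ++ v | u <- s1, v <- s2] => w Hw.
case: (pickP (fun i : 'I_(size w).+1 => a (take i w) * f (drop i w) != 0)) => [i Hi|H].
  move: Hi; rewrite mulf_eq0 negb_or => /andP [/Ha Hu /Hf Hv].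
  by apply/allpairsP; exists (take i w, drop i w); rewrite cat_take_drop.
move: Hw; rewrite /smul big1 ?eqxx // => i _.
by apply/eqP/negbFE; rewrite H.
Qed.

Definition Lset (bad : seq bool -> bool) : series k -> Prop :=
  fun f => fin_supp f /\ forall T, bad T -> S f T = 0.

Lemma ideal_base_L bad : ideal_base (Lset bad).
Proof.
split.
- by move=> f [].
- move=> f g E [[s Hs] HS]; split.
    by exists s => w; rewrite -E; apply: Hs.
  by move=> T HT; rewrite -(HS T HT); apply: S_ext => w; rewrite E.
- split; first by exists [::] => w; rewrite /s0 eqxx.
  move=> T _; rewrite /S big1 // => w _; by rewrite /s0 raddf0 mul0r.
- move=> f g [Hf Sf] [Hg Sg]; split; first exact: fs_add.
  by move=> T HT; rewrite S_add Sf ?Sg ?addr0.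
- by move=> f Hf Hr; split => // T _; apply: S_relideal.
Qed.

Lemma left_L (bad : seq bool -> bool) : (forall i T, bad T -> bad (drop i T)) -> left_ideal_A (Lset bad).
Proof.
move=> Hd; split; first exact: ideal_base_L.
move=> a f Ha [Hf Sf]; split; first exact: fs_smul.
by move=> T HT; rewrite S_smul big1 // => i _; rewrite Sf ?mulr0 ?Hd.
Qed.

Lemma right_L (bad : seq bool -> bool) : (forall i T, bad T -> bad (take i T)) -> right_ideal_A (Lset bad).
Proof.
move=> Hd; split; first exact: ideal_base_L.
move=> a f Ha [Hf Sf]; split; first exact: fs_smul.
by move=> T HT; rewrite S_smul big1 // => i _; rewrite Sf ?mul0r ?Hd.
Qed.


Lemma wt01 (w : word) T : all (fun x : 'I_7 => (val x <= 1)%N) w -> size w = size T ->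
  wt k w T = (T == [seq val x == 0%N | x <- w])%:R.
Proof.
elim: w T => [|x w IH] [|t T] //= /andP [Hx Hw] [Hs].
rewrite eqseq_cons IH //.
case: x Hx => [[|[|x]] Hx] //= _; case: t; rewrite /cn /= ?mul1r ?mul0r //.
Qed.

Lemma S_ind01 (w0 : word) T : all (fun x : 'I_7 => (val x <= 1)%N) w0 ->
  S (ind k w0) T = (T == [seq val x == 0%N | x <- w0])%:R.
Proof.
move=> Hw; rewrite S_ind; case: eqP => [E|NE]; first by rewrite wt01.
case: eqP => // E; case: NE; by rewrite E size_map.
Qed.

Lemma fs_ind (w0 : word) : fin_supp (ind k w0).
Proof. exists [:: w0] => w; rewrite /ind inE; case: (w == w0) => //; by rewrite eqxx. Qed.

Lemma one_neq0 : (1 : M) != 0.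
Proof. exact: oner_neq0. Qed.
End S4.


Definition badL (n : nat) (T : seq bool) : bool :=
  ~~ has (fun j => suffix (true :: nseq j false) T) (iota 0 n.+1).
Definition badR (n : nat) (T : seq bool) : bool :=
  ~~ has (fun j => prefix (rcons (nseq j false) true) T) (iota 0 n.+1).

Lemma iota_mono n j : j \in iota 0 n.+1 -> j \in iota 0 n.+2.
Proof. by rewrite !mem_iota !add0n => /andP [_ H]; rewrite (leq_trans H). Qed.

Lemma badL_mono n T : badL n.+1 T -> badL n T.
Proof. by move=> /hasPn H; apply/hasPn => j /iota_mono /H. Qed.
Lemma badR_mono n T : badR n.+1 T -> badR n T.
Proof. by move=> /hasPn H; apply/hasPn => j /iota_mono /H. Qed.

Lemma badL_drop n i T : badL n T -> badL n (drop i T).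
Proof.
move=> /hasPn H; apply/hasPn => j Hj; apply/negP => /suffixP [s E].
move/negP: (H j Hj); apply; apply/suffixP; exists (take i T ++ s).
by rewrite -catA -E cat_take_drop.
Qed.

Lemma badR_take n i T : badR n T -> badR n (take i T).
Proof.
move=> /hasPn H; apply/hasPn => j Hj; apply/negP => /prefixP [s E].
move/negP: (H j Hj); apply; apply/prefixP; exists (s ++ drop i T).
by rewrite catA -E cat_take_drop.
Qed.

Lemma notacc (k : fieldType) (P : (series k -> Prop) -> Prop) (bad : nat -> seq bool -> bool)
  (w0 : nat -> word) :
  (forall n, P (@Lset k (bad n))) ->
  (forall n T, bad n.+1 T -> bad n T) ->
  (forall n, all (fun x : 'I_7 => (val x <= 1)%N) (w0 n)) ->
  (forall n, bad n [seq val x == 0%N | x <- w0 n]) ->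
  (forall n, ~~ bad n.+1 [seq val x == 0%N | x <- w0 n]) ->
  ~ acc_on P.
Proof.
move=> HP Hm H01 Hb Hnb Hacc.
have [N HN] := Hacc (fun n => @Lset k (bad n)) HP
  (fun n f '(conj Hf Sf) => conj Hf (fun T HT => Sf T (Hm n T HT))).
have Hin : @Lset k (bad N.+1) (ind k (w0 N)).
  split; first exact: fs_ind.
  move=> T HT; rewrite S_ind01 //; case: eqP => // E.
  by move: (Hnb N); rewrite -E HT.
have [_ S0] := HN N.+1 (leqnSn N) _ Hin.
have := S0 _ (Hb N); rewrite S_ind01 // eqxx => E.
by apply: (negP (one_neq0 k)); apply/eqP; exact: E.
Qed.

Definition o1 : 'I_7 := @Ordinal 7 1 isT.

Theorem corollary5p6 (k : fieldType) :
  ~ A_left_noetherian k /\ ~ A_right_noetherian k.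
Proof.
split.
- apply: (@notacc k _ badL (fun n => ord0 :: nseq n.+1 o1)).
  + move=> n; apply: left_L => i T; exact: badL_drop.
  + exact: badL_mono.
  + by move=> n /=; rewrite all_nseq orbT.
  + move=> n; rewrite /= map_nseq /=; apply/hasPn => j; rewrite mem_iota add0n => /andP [_ Hj].
    apply/negP => /suffixP [[|y s] /= E].
      move: (congr1 size E); rewrite /= !size_nseq => -[] En.
      by move: Hj; rewrite -En ltnn.
    case: E => _ E.
    have : true \in nseq n.+1 false by rewrite [nseq _ _](_ : _ = s ++ true :: nseq j false) ?mem_cat ?mem_head ?orbT.
    by rewrite mem_nseq.
  + move=> n; rewrite /= map_nseq /= negbK; apply/hasP; exists n.+1.
      by rewrite mem_iota add0n ltnSn.
    by apply/suffixP; exists [::].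
- apply: (@notacc k _ badR (fun n => rcons (nseq n.+1 o1) ord0)).
  + move=> n; apply: right_L => i T; exact: badR_take.
  + exact: badR_mono.
  + by move=> n; rewrite all_rcons all_nseq orbT.
  + move=> n; rewrite (_ : [seq val x == 0%N | x <- rcons (nseq n.+1 o1) ord0] = rcons (nseq n.+1 false) true); last by rewrite map_rcons map_nseq.
    apply/hasPn => j; rewrite mem_iota add0n => /andP [_ Hj].
    apply/negP => /prefixP [s E].
    have := congr1 (nth false ^~ j) E.
    rewrite nth_cat size_rcons size_nseq ltnSn.
    rewrite !nth_rcons !size_nseq Hj ltnn eqxx nth_nseq Hj.
    by [].
  + move=> n; rewrite map_rcons map_nseq /= negbK; apply/hasP; exists n.+1.
      by rewrite mem_iota add0n ltnSn.
    by apply/prefixP; exists [::]; rewrite cats0.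
Qed.
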